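(* Let $\mathbb{Q}[y,z]$ be the polynomial ring and let $D$ be the unique derivation of $\mathbb{Q}[y,z]$ with $D(y)=z^2$ and $D(z)=yz$ (so that, with $y=\tan x$, $z=\sec x$, $D$ corresponds to $d/dx$). Define integers $R_{n,k}$, $W_{n,k}$, $W^{l}_{n,k}$ by $$D^n(y+z)=\sum_{k=0}^{n}R_{n,k}\,y^{n-k}z^{k+1}\ (n\ge 1),\qquad D^n(y)=\sum_{k=0}^{\lfloor (n-1)/2\rfloor}W_{n,k}\,y^{n-2k-1}z^{2k+2}\ (n\ge 1),\qquad D^n(z)=\sum_{k=0}^{\lfloor n/2\rfloor}W^{l}_{n,k}\,y^{n-2k}z^{2k+1}\ (n\ge 0),$$ with the convention that any of these numbers whose index $k$ lies outside the stated summation range is $0$. Then for $0\le k\le n$: (i) $R_{n+1,k}=(k+1)R_{n,k}+(n-k+2)R_{n,k-2}$ for all $n\ge 1$; (ii) $W_{n,k}=(2k+2)W_{n-1,k}+(n-2k)W_{n-1,k-1}$ for all $n\ge 2$; (iii) $W^{l}_{n,k}=(2k+1)W^{l}_{n-1,k}+(n-2k+1)W^{l}_{n-1,k-1}$ for all $n\ge 1$.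
   Context: The expansions are in the polynomial ring $\mathbb{Q}[y,z]$ (i.e. formally, without using $z^2=1+y^2$). *)

(* Defs.v *)
From HB Require Import structures.
From mathcomp Require Import all_boot all_order all_algebra.
From mathcomp Require Import mpoly.
Set Implicit Arguments. Unset Strict Implicit. Unset Printing Implicit Defensive.
Import Order.TTheory GRing.Theory Num.Theory.
Local Open Scope ring_scope.

Definition iy : 'I_2 := @Ordinal 2 0 isT.
Definition iz : 'I_2 := @Ordinal 2 1 isT.
Definition y : {mpoly rat[2]} := 'X_iy.
Definition z : {mpoly rat[2]} := 'X_iz.

(* The unique derivation D of Q[y,z] with D y = z^2 and D z = y z:
   D p = (dp/dy) * D y + (dp/dz) * D z. *)
Definition D (p : {mpoly rat[2]}) : {mpoly rat[2]} :=
  mderiv iy p * z ^+ 2 + mderiv iz p * (y * z).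

Definition coefyz (p : {mpoly rat[2]}) (a b : nat) : rat :=
  p@_(U_(iy) *+ a + U_(iz) *+ b)%MM.

Definition Rnk (n : nat) (k : int) : rat :=
  if (1 <= n)%N && (0 <= k) && (k <= n%:Z)
  then coefyz (iter n D (y + z)) (n - `|k|)%N (`|k| + 1)%N
  else 0.

Definition Wnk (n : nat) (k : int) : rat :=
  if (1 <= n)%N && (0 <= k) && (2 * k + 1 <= n%:Z)
  then coefyz (iter n D y) (n - 2 * `|k| - 1)%N (2 * `|k| + 2)%N
  else 0.

Definition Wlnk (n : nat) (k : int) : rat :=
  if (0 <= k) && (2 * k <= n%:Z)
  then coefyz (iter n D z) (n - 2 * `|k|)%N (2 * `|k| + 1)%N
  else 0.

(* Main.v *)
Require Import Defs.
From HB Require Import structures.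
From mathcomp Require Import all_boot all_order all_algebra.
From mathcomp Require Import mpoly.
From mathcomp Require Import zify.
Import Order.TTheory GRing.Theory Num.Theory.
Local Open Scope ring_scope.

Definition mm (a b : nat) : 'X_{1..2} := (U_(iy) *+ a + U_(iz) *+ b)%MM.

Lemma ord2 (i : 'I_2) : i = iy \/ i = iz.
Proof. case: i => [[|[|//]]] Hi; [left|right]; exact/val_inj. Qed.

Lemma mm_iy a b : mm a b iy = a.
Proof. by rewrite /mm mnmDE !mulmnE !mnm1E /= mul1n mul0n addn0. Qed.
Lemma mm_iz a b : mm a b iz = b.
Proof. by rewrite /mm mnmDE !mulmnE !mnm1E /= mul1n mul0n. Qed.

Lemma mmE (m : 'X_{1..2}) : m = mm (m iy) (m iz).
Proof. by apply/mnmP => i; case: (ord2 i) => ->; rewrite ?mm_iy ?mm_iz. Qed.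

Lemma lem2 (m1 m2 : 'X_{1..2}) : (m1 <= m2)%MM = (m1 iy <= m2 iy)%N && (m1 iz <= m2 iz)%N.
Proof.
apply/mnm_lepP/andP => [H|[H1 H2] i]; first by split; apply H.
by case: (ord2 i) => ->.
Qed.

Lemma coefMX (p : {mpoly rat[2]}) m k :
  (p * 'X_[m])@_k = if (m <= k)%MM then p@_(k - m) else 0.
Proof.
case: ifP => h.
  by rewrite -{1}(submK h) addmC mcoeffMX.
apply: memN_msupp_eq0; rewrite (perm_mem (msuppMX p m)).
apply/mapP => -[m' _ E]; move: h; rewrite E lem_addr //.
Qed.

Lemma zE : z ^+ 2 = 'X_[mm 0 2].
Proof. by rewrite /z mpolyXn /mm mulm0n add0m. Qed.
Lemma yzE : y * z = 'X_[mm 1 1].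
Proof. by rewrite /y /z -mpolyXD /mm !mulm1n. Qed.

Lemma coefD (p : {mpoly rat[2]}) A B :
  coefyz (D p) A B =
  (if (2 <= B)%N then coefyz p A.+1 (B - 2) *+ A.+1 else 0) +
  (if (1 <= A)%N && (1 <= B)%N then coefyz p (A - 1) B *+ B else 0).
Proof.
rewrite /coefyz /D mcoeffD zE yzE !coefMX !lem2 -/(mm A B) !mm_iy !mm_iz /=.
congr (_ + _).
  case: ifP => // hB; rewrite mcoeff_mderiv mnmBE !mm_iy.
  congr (_ *+ _); first congr (p@_ _).
  apply/mnmP => i; case: (ord2 i) => ->;
    rewrite !(mnmDE, mnmBE, mm_iy, mm_iz, mnm1E, mulmnE) /=; lia.
  lia.
case: ifP => // /andP[hA hB]; rewrite mcoeff_mderiv mnmBE !mm_iz.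
congr (_ *+ _); first congr (p@_ _).
  apply/mnmP => i; case: (ord2 i) => ->;
    rewrite !(mnmDE, mnmBE, mm_iy, mm_iz, mnm1E, mulmnE) /=; lia.
lia.
Qed.

Lemma coefD0 p a : coefyz (D p) a 0 = 0.
Proof. by rewrite coefD /= andbF addr0. Qed.

Lemma intRn (N : nat) : ((Posz N)%:~R : rat) = N%:R.
Proof. by []. Qed.

Lemma RnkP n k : (1 <= n)%N -> (k <= n)%N ->
  Rnk n (Posz k) = coefyz (iter n D (y + z)) (n - k) (k + 1).
Proof.
move=> h1 h2; rewrite /Rnk.
have -> : (1 <= n)%N && (0 <= Posz k) && (Posz k <= n%:Z) by rewrite h1 lez_nat h2.
by rewrite absz_nat.
Qed.

Lemma Rnk_neg n k : k < 0 -> Rnk n k = 0.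
Proof. by move=> h; rewrite /Rnk; case: ifP => //; case/andP=> /andP[_ h']; move: h; rewrite ltNge h'. Qed.

Lemma part1 (n : nat) (k : int) : (1 <= n)%N -> 0 <= k -> k <= n%:Z ->
     Rnk n.+1 k = (k + 1)%:~R * Rnk n k + (n%:Z - k + 2)%:~R * Rnk n (k - 2).
Proof.
case: n => // n _; case: k => // k _ hkn.
have hk : (k <= n.+1)%N by rewrite -lez_nat.
rewrite RnkP // ?RnkP //; last lia.
rewrite iterS coefD.
have -> : (1 <= n.+2 - k)%N && (1 <= k + 1)%N = true by apply/andP; split; lia.
have -> : ((Posz k + 1) = Posz (k + 1)) by lia.
rewrite intRn mulr_natl.
case: (ltnP k 2) => hk2.
  rewrite Rnk_neg; last lia.
  rewrite mulr0 addr0.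
  case: ifP => h; last by rewrite add0r; congr (coefyz _ _ _ *+ _); lia.
  have -> : (k + 1 - 2 = 0)%N by lia.
  rewrite iterS coefD0 mul0rn add0r; congr (coefyz _ _ _ *+ _); lia.
have -> : Posz k - 2 = Posz (k - 2) by lia.
rewrite RnkP //; last lia.
have -> : (n.+1%:Z - Posz k + 2) = Posz (n.+3 - k) by lia.
rewrite intRn mulr_natl.
have -> : (2 <= k + 1)%N = true by lia.
rewrite addrC; congr (_ + _); congr (coefyz _ _ _ *+ _); lia.
Qed.

Lemma WnkP n k : (1 <= n)%N -> (2 * k + 1 <= n)%N ->
  Wnk n (Posz k) = coefyz (iter n D y) (n - 2 * k - 1) (2 * k + 2).
Proof.
move=> h1 h2; rewrite /Wnk.
have -> : (1 <= n)%N && (0 <= Posz k) && (2 * Posz k + 1 <= n%:Z) = true.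
  rewrite h1 /=; apply/idP; lia.
by rewrite absz_nat.
Qed.

Lemma Wnk_neg n k : k < 0 -> Wnk n k = 0.
Proof. by move=> h; rewrite /Wnk; case: ifP => //; case/andP=> /andP[_ h']; move: h; rewrite ltNge h'. Qed.

Lemma Wnk_big n k : n%:Z < 2 * k + 1 -> Wnk n k = 0.
Proof. by move=> h; rewrite /Wnk; case: ifP => //; case/andP=> _ h'; move: h; rewrite ltNge h'. Qed.

Lemma part2 (n : nat) (k : int) : (2 <= n)%N -> 0 <= k -> k <= n%:Z ->
     Wnk n k = (2 * k + 2)%:~R * Wnk (n - 1)%N k
               + (n%:Z - 2 * k)%:~R * Wnk (n - 1)%N (k - 1).
Proof.
case: n => [|[|m]] // _; case: k => // k _ hkn.
have -> : (m.+2 - 1 = m.+1)%N by lia.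
have -> : (2 * Posz k + 2) = Posz (2 * k + 2) by lia.
rewrite intRn.
case: (leqP (2 * k + 1) m.+2) => hb; last first.
  rewrite Wnk_big; last lia.
  rewrite Wnk_big; last lia.
  rewrite mulr0 add0r.
  case: (leqP (2 * k) m.+2) => hb2; last by rewrite Wnk_big ?mulr0 //; lia.
  have -> : (m.+2%:Z - 2 * Posz k) = 0 by lia.
  by rewrite mul0r.
rewrite WnkP // iterS coefD.
have -> : (2 <= 2 * k + 2)%N = true by lia.
have -> : (m.+2%:Z - 2 * Posz k) = Posz (m.+2 - 2 * k) by lia.
rewrite intRn addrC.
congr (_ + _).
  case: ifP => h.
    rewrite WnkP //; last lia. rewrite -[in LHS]mulr_natl; congr (_%:R * coefyz _ _ _); lia.
  rewrite Wnk_big ?mulr0 //; lia.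
case: k hkn hb => [|k] hkn hb.
  rewrite Wnk_neg // mulr0. rewrite iterS /=. have -> : (2 * 0 + 2 - 2 = 0)%N by []. by rewrite coefD0 mul0rn.
have -> : Posz k.+1 - 1 = Posz k by lia.
rewrite WnkP //; last lia. rewrite -[in LHS]mulr_natl; congr (_%:R * coefyz _ _ _); lia.
Qed.

Lemma WlP n k : (2 * k <= n)%N ->
  Wlnk n (Posz k) = coefyz (iter n D z) (n - 2 * k) (2 * k + 1).
Proof.
move=> h2; rewrite /Wlnk.
have -> : (0 <= Posz k) && (2 * Posz k <= n%:Z) = true by apply/idP; lia.
by rewrite absz_nat.
Qed.

Lemma Wl_neg n k : k < 0 -> Wlnk n k = 0.
Proof. by move=> h; rewrite /Wlnk; case: ifP => //; case/andP=> h' _; move: h; rewrite ltNge h'. Qed.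

Lemma Wl_big n k : n%:Z < 2 * k -> Wlnk n k = 0.
Proof. by move=> h; rewrite /Wlnk; case: ifP => //; case/andP=> _ h'; move: h; rewrite ltNge h'. Qed.

Lemma part3 (n : nat) (k : int) : (1 <= n)%N -> 0 <= k -> k <= n%:Z ->
     Wlnk n k = (2 * k + 1)%:~R * Wlnk (n - 1)%N k
                + (n%:Z - 2 * k + 1)%:~R * Wlnk (n - 1)%N (k - 1).
Proof.
case: n => [|m] // _; case: k => // k _ hkn.
have -> : (m.+1 - 1 = m)%N by lia.
have -> : (2 * Posz k + 1) = Posz (2 * k + 1) by lia.
rewrite intRn.
case: (leqP (2 * k) m.+1) => hb; last first.
  rewrite Wl_big; last lia.
  rewrite Wl_big; last lia.
  rewrite mulr0 add0r.
  case: (leqP (2 * k) m.+2) => hb2; last by rewrite Wl_big ?mulr0 //; lia.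
  have -> : (m.+1%:Z - 2 * Posz k + 1) = 0 by lia.
  by rewrite mul0r.
rewrite WlP // iterS coefD.
have -> : (m.+1%:Z - 2 * Posz k + 1) = Posz (m.+2 - 2 * k) by lia.
rewrite intRn addrC.
congr (_ + _).
  case: ifP => h.
    rewrite WlP //; last lia. rewrite -[in LHS]mulr_natl; congr (_%:R * coefyz _ _ _); lia.
  rewrite Wl_big ?mulr0 //; lia.
case: k hkn hb => [|k] hkn hb.
  by rewrite Wl_neg // mulr0.
have -> : Posz k.+1 - 1 = Posz k by lia.
have -> : (2 <= 2 * k.+1 + 1)%N = true by lia.
rewrite WlP //; last lia. rewrite -[in LHS]mulr_natl; congr (_%:R * coefyz _ _ _); lia.
Qed.

Theorem mainTheorem1 :
  (forall (n : nat) (k : int), (1 <= n)%N -> 0 <= k -> k <= n%:Z ->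
     Rnk n.+1 k = (k + 1)%:~R * Rnk n k + (n%:Z - k + 2)%:~R * Rnk n (k - 2))
  /\ (forall (n : nat) (k : int), (2 <= n)%N -> 0 <= k -> k <= n%:Z ->
     Wnk n k = (2 * k + 2)%:~R * Wnk (n - 1)%N k
               + (n%:Z - 2 * k)%:~R * Wnk (n - 1)%N (k - 1))
  /\ (forall (n : nat) (k : int), (1 <= n)%N -> 0 <= k -> k <= n%:Z ->
     Wlnk n k = (2 * k + 1)%:~R * Wlnk (n - 1)%N k
                + (n%:Z - 2 * k + 1)%:~R * Wlnk (n - 1)%N (k - 1)).
Proof. split; [exact: part1 | split; [exact: part2 | exact: part3]]. Qed.
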